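(* There is an absolute constant $\kappa>0$ such that for every set $C$ of concepts over $\{0,1\}^n$ with $|C|\ge2$, every quantum network that exactly learns $C$ from quantum membership queries (i.e. for every $c\in C$, when its oracle gates are $QMQ_c$, it outputs with probability at least $2/3$ a representation of a Boolean circuit $h$ with $h(x)=c(x)$ for all $x$) has query complexity at least $\kappa\,(1/\hat\gamma^{C})^{1/2}$. In other words, any quantum exact learning algorithm for $C$ has sample complexity $\Omega((1/\hat\gamma^C)^{1/2})$.
   Context: For $C'\subseteq C$, $a\in\{0,1\}^n$, $b\in\{0,1\}$: $C'_{\langle a,b\rangle}=\{c\in C': c(a)=b\}$, $\gamma^{C'}_{\langle a,b\rangle}=|C'_{\langle a,b\rangle}|/|C'|$, $\gamma^{C'}_a=\min_b\gamma^{C'}_{\langle a,b\rangle}$, $\gamma^{C'}=\max_a\gamma^{C'}_a$, and $\hat\gamma^{C}=\min_{C'\subseteq C,|C'|\ge2}\gamma^{C'}$. A quantum network on an $m$-qubit register is a sequence $U_0,O_1,U_1,\dots,O_T,U_T$ of unitaries applied to $|0^m\rangle$, the $U_i$ arbitrary fixed unitaries and each $O_i$ an oracle gate, followed by a computational-basis measurement of some qubits whose outcome is the output; $T$ is the query complexity. The gate $QMQ_c$ maps $|x,b,y\rangle$ to $|x,b\oplus c(x),y\rangle$ for $x\in\{0,1\}^n$, $b\in\{0,1\}$. *)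

(* Defs.v *)
From HB Require Import structures.
From mathcomp Require Import all_boot all_order all_algebra.
From mathcomp Require Import complex.
From mathcomp Require Import Rstruct.
From Stdlib Require Rdefinitions.
Notation R := Rdefinitions.R.
Set Implicit Arguments. Unset Strict Implicit. Unset Printing Implicit Defensive.
Import Order.TTheory GRing.Theory Num.Theory.
Local Open Scope ring_scope.

Definition point (n : nat) := n.-tuple bool.
Definition concept (n : nat) := {ffun point n -> bool}.

Definition gamma_ab n (C' : {set concept n}) (a : point n) (b : bool) : R :=
  #|[set c in C' | c a == b]|%:R / #|C'|%:R.
Definition gamma_a n (C' : {set concept n}) (a : point n) : R :=
  Num.min (gamma_ab C' a false) (gamma_ab C' a true).
(* max over a; all values are >= 0 and the index set is nonempty *)
Definition gamma n (C' : {set concept n}) : R :=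
  \big[Num.max/0]_(a : point n) gamma_a C' a.
(* min over subsets C' of C with |C'| >= 2; all values are <= 1 *)
Definition gammahat n (C : {set concept n}) : R :=
  \big[Num.min/1]_(C' : {set concept n} | (C' \subset C) && (2 <= #|C'|)%N) gamma C'.

(** Quantum networks.  The register has m = n + 1 + k qubits; a computational
    basis state is |x, b, y> with x in {0,1}^n, b in {0,1}, y in {0,1}^k. *)
Definition basis (n k : nat) := (point n * bool * k.-tuple bool)%type.
Notation Cx := (complex R).
Definition qvec n k := basis n k -> Cx.
Definition qop n k := basis n k -> basis n k -> Cx. (* matrices, A s t = <s|A|t> *)

Definition conjz (z : Cx) : Cx := Complex (complex.Re z) (- complex.Im z).
Definition sqnorm (z : Cx) : R := complex.Re z ^+ 2 + complex.Im z ^+ 2.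

Definition apply n k (A : qop n k) (v : qvec n k) : qvec n k :=
  fun s => \sum_(t : basis n k) A s t * v t.

(* A^dagger A = I (equivalent to unitarity in finite dimension) *)
Definition unitary n k (A : qop n k) : Prop :=
  forall s t : basis n k, \sum_(u : basis n k) conjz (A u s) * A u t = (s == t)%:R.

Definition zero_state n k : qvec n k :=
  fun s => (s == ([tuple of nseq n false], false, [tuple of nseq k false]))%:R.

Definition QMQ n k (c : concept n) : qop n k :=
  fun s t => (s == (t.1.1, t.1.2 (+) c t.1.1, t.2))%:R.

(* state after U_0, O_1, U_1, ..., O_i, U_i *)
Fixpoint run n k (U : nat -> qop n k) (c : concept n) (i : nat) : qvec n k :=
  match i with
  | 0 => apply (U 0%N) (@zero_state n k)
  | j.+1 => apply (U i) (apply (@QMQ n k c) (run U c j))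
  end.

(* Output: computational-basis measurement of the register; the measured string
   is interpreted by [dec] as (the function computed by) a Boolean circuit h,
   or [None] if it is not a valid circuit representation. *)
Definition success_prob n k (U : nat -> qop n k) (T : nat)
    (dec : basis n k -> option (concept n)) (c : concept n) : R :=
  \sum_(s : basis n k | dec s == Some c) sqnorm (run U c T s).

(* Main.v *)
Require Import Defs.
From HB Require Import structures.
From mathcomp Require Import all_boot all_order all_algebra.
From mathcomp Require Import complex.
From mathcomp Require Import Rstruct.
From mathcomp Require Import ring lra.
From Stdlib Require Rdefinitions.
Import Order.TTheory GRing.Theory Num.Theory.
Local Open Scope ring_scope.
Set Implicit Arguments. Unset Strict Implicit. Unset Printing Implicit Defensive.
Lemma ReD (x y : Cx) : complex.Re (x + y) = complex.Re x + complex.Re y.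
Proof. by case: x; case: y. Qed.
Lemma ImD (x y : Cx) : complex.Im (x + y) = complex.Im x + complex.Im y.
Proof. by case: x; case: y. Qed.
Lemma ReN (x : Cx) : complex.Re (- x) = - complex.Re x.
Proof. by case: x. Qed.
Lemma ImN (x : Cx) : complex.Im (- x) = - complex.Im x.
Proof. by case: x. Qed.
Lemma ReM (x y : Cx) : complex.Re (x * y) = complex.Re x * complex.Re y - complex.Im x * complex.Im y.
Proof. by case: x; case: y. Qed.
Lemma ImM (x y : Cx) : complex.Im (x * y) = complex.Re x * complex.Im y + complex.Im x * complex.Re y.
Proof. by case: x; case: y. Qed.
Lemma Re0 : complex.Re (0 : Cx) = 0. Proof. by []. Qed.
Lemma Im0 : complex.Im (0 : Cx) = 0. Proof. by []. Qed.
Lemma Re_sum (I : finType) (P : pred I) (F : I -> Cx) :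
  complex.Re (\sum_(i | P i) F i) = \sum_(i | P i) complex.Re (F i).
Proof. exact: (big_morph _ ReD Re0). Qed.
Lemma conjzD (x y : Cx) : conjz (x + y) = conjz x + conjz y.
Proof. case: x; case: y => a b c d; rewrite /conjz /=. congr Complex; ring. Qed.
Lemma conjzM (x y : Cx) : conjz (x * y) = conjz x * conjz y.
Proof. case: x; case: y => a b c d; rewrite /conjz /=. congr Complex; ring. Qed.
Lemma conjz0 : conjz 0 = 0.
Proof. rewrite /conjz /=. congr Complex; ring. Qed.
Lemma conjz_sum (I : finType) (P : pred I) (F : I -> Cx) :
  conjz (\sum_(i | P i) F i) = \sum_(i | P i) conjz (F i).
Proof. exact: (big_morph _ conjzD conjz0). Qed.
Lemma sqnorm_Re (z : Cx) : sqnorm z = complex.Re (conjz z * z).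
Proof. case: z => a b; rewrite /sqnorm /conjz /=; ring. Qed.
Lemma sqnorm_ge0 (z : Cx) : 0 <= sqnorm z.
Proof. rewrite /sqnorm; apply: addr_ge0; exact: sqr_ge0. Qed.
Definition N n k (v : qvec n k) : R := \sum_s sqnorm (v s).

Lemma N_ge0 n k (v : qvec n k) : 0 <= N v.
Proof. by apply: sumr_ge0 => s _; exact: sqnorm_ge0. Qed.

Lemma unitary_N n k (A : qop n k) (v : qvec n k) : unitary A -> N (apply A v) = N v.
Proof.
move=> uA; rewrite /N.
under eq_bigr => s _ do rewrite sqnorm_Re.
under [RHS]eq_bigr => s _ do rewrite sqnorm_Re.
rewrite -!Re_sum; congr complex.Re.
rewrite /apply.
under eq_bigr => s _ do rewrite conjz_sum big_distrlr /=.
rewrite exchange_big /=.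
apply: eq_bigr => t _.
rewrite exchange_big /=.
rewrite (bigD1 t) //= [X in _ + X]big1 ?addr0.
  transitivity (\sum_(i : basis n k) (conjz (v t) * v t) * (conjz (A i t) * A i t)).
    by apply: eq_bigr => i _; rewrite conjzM; ring.
  by rewrite -mulr_sumr uA eqxx mulr1.
idtac.
move=> u ut.
transitivity (\sum_(i : basis n k) (conjz (v t) * v u) * (conjz (A i t) * A i u)).
  by apply: eq_bigr => i _; rewrite conjzM; ring.
by rewrite -mulr_sumr uA eq_sym (negbTE ut) mulr0.
Qed.
Lemma sqnorm_sub2 (a b : Cx) : sqnorm (a - b) <= 2 * sqnorm a + 2 * sqnorm b.
Proof.
case: a b => a1 a2 [b1 b2]; rewrite /sqnorm ReD ImD ReN ImN /=.
have h1 := sqr_ge0 (a1 + b1); have h2 := sqr_ge0 (a2 + b2).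
rewrite !expr2 in h1 h2 *; nra.
Qed.
Lemma sqnorm_subm (a b m : Cx) : sqnorm (a - b) <= 2 * sqnorm (a - m) + 2 * sqnorm (b - m).
Proof.
have -> : a - b = (a - m) - (b - m) by ring.
exact: sqnorm_sub2.
Qed.
Lemma sqnorm_addj (j : R) (a b : Cx) : 0 < j ->
  j * sqnorm (a + b) <= (j + 1) * sqnorm a + j * (j + 1) * sqnorm b.
Proof.
move=> j0; case: a b => a1 a2 [b1 b2]; rewrite /sqnorm ReD ImD /=.
have h1 := sqr_ge0 (a1 - j * b1); have h2 := sqr_ge0 (a2 - j * b2).
rewrite !expr2 in h1 h2 *; nra.
Qed.
Lemma sqnorm_dist (a b : Cx) : sqnorm a <= 4 * sqnorm (a - b) + 4 / 3 * sqnorm b.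
Proof.
case: a b => a1 a2 [b1 b2]; rewrite /sqnorm ReD ImD ReN ImN /=.
have h1 := sqr_ge0 (a1 - 4 / 3 * b1); have h2 := sqr_ge0 (a2 - 4 / 3 * b2).
rewrite !expr2 in h1 h2 *; nra.
Qed.
Definition flip n k (c : concept n) (s : basis n k) : basis n k :=
  (s.1.1, s.1.2 (+) c s.1.1, s.2).

Lemma flipK n k (c : concept n) : involutive (@flip n k c).
Proof. by case=> [[x b] y]; rewrite /flip /= addbK. Qed.

Lemma apply_QMQ n k (c : concept n) (v : qvec n k) s :
  apply (@QMQ n k c) v s = v (flip c s).
Proof.
rewrite /apply /QMQ (bigD1 (flip c s)) //=.
rewrite [X in _ + X]big1 ?addr0.
  have -> : (s.1.1, s.1.2 (+) c s.1.1 (+) c s.1.1, s.2) = s.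
    by case: s => [[x b] y] /=; rewrite addbK.
  by rewrite eqxx mul1r.
move=> t tn; case: eqP => [E|]; last by rewrite mul0r.
exfalso; move/eqP: tn; apply; rewrite E.
by case: t {E} => [[x b] y]; rewrite /flip /= addbK.
Qed.

Lemma N_QMQ n k (c : concept n) (v : qvec n k) : N (apply (@QMQ n k c) v) = N v.
Proof.
rewrite /N; under eq_bigr => s _ do rewrite apply_QMQ.
by rewrite [RHS](reindex_inj (can_inj (flipK c))).
Qed.

Definition W n k (c m : concept n) (v : qvec n k) : R :=
  \sum_s (c s.1.1 != m s.1.1)%:R * sqnorm (v s).

Lemma QMQ_diff n k (c m : concept n) (v : qvec n k) :
  N (fun s => apply (@QMQ n k c) v s - apply (@QMQ n k m) v s) <= 4 * W c m v.
Proof.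
rewrite /N; under eq_bigr => s _ do rewrite !apply_QMQ.
apply: (@le_trans _ _ (\sum_s ((c s.1.1 != m s.1.1)%:R * (2 * sqnorm (v (flip c s)))
   + (c s.1.1 != m s.1.1)%:R * (2 * sqnorm (v (flip m s)))))).
  apply: ler_sum => s _; case: eqP => [E|_].
    by rewrite /flip E subrr /sqnorm /= expr0n /= addr0 !mul0r addr0.
  by rewrite !mul1r; exact: sqnorm_sub2.
rewrite big_split /= (reindex_inj (can_inj (flipK c))) /=.
rewrite [X in _ + X](reindex_inj (can_inj (flipK m))) /=.
rewrite /W mulr_sumr -big_split /=; apply: ler_sum => s _.
rewrite !flipK; lra.
Qed.
Lemma sqnorm_nat (b : bool) : sqnorm (b%:R : Cx) = b%:R.
Proof. by case: b; rewrite /sqnorm /= ?expr1n ?expr0n /= ?addr0. Qed.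

Lemma N_zero n k : N (@zero_state n k) = 1.
Proof.
rewrite /N /zero_state (bigD1 ([tuple of nseq n false], false, [tuple of nseq k false])) //=.
rewrite eqxx sqnorm_nat big1 ?addr0 //.
by move=> s /negbTE ->; rewrite sqnorm_nat.
Qed.

Lemma run_N n k (U : nat -> qop n k) (T : nat) (m : concept n) :
  (forall i, (i <= T)%N -> unitary (U i)) ->
  forall i, (i <= T)%N -> N (run U m i) = 1.
Proof.
move=> hU; elim=> [|i IH] hi /=.
  by rewrite unitary_N ?N_zero //; apply: hU.
rewrite unitary_N ?N_QMQ ?IH //; [exact: ltnW | exact: hU].
Qed.

Lemma apply_sub n k (A : qop n k) (v w : qvec n k) s :
  apply A v s - apply A w s = apply A (fun t => v t - w t) s.
Proof. by rewrite /apply -sumrB; apply: eq_bigr => t _; ring. Qed.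

Definition Dd n k (U : nat -> qop n k) (c m : concept n) i :=
  N (fun s => run U c i s - run U m i s).
Definition Ee n k (U : nat -> qop n k) (c m : concept n) i :=
  N (fun s => apply (@QMQ n k c) (run U m i) s - apply (@QMQ n k m) (run U m i) s).

Lemma N_le n k (v w : qvec n k) : (forall s, sqnorm (v s) <= sqnorm (w s)) -> N v <= N w.
Proof. by move=> h; apply: ler_sum => s _. Qed.

Lemma hybrid n k (U : nat -> qop n k) (T : nat) (c m : concept n) :
  (forall i, (i <= T)%N -> unitary (U i)) ->
  forall j, (j <= T)%N -> Dd U c m j <= j%:R * \sum_(i < j) Ee U c m i.
Proof.
move=> hU; elim=> [|j IH] hj.
  rewrite /Dd /= mul0r /N big1 // => s _.
  by rewrite subrr /sqnorm /= expr0n /= addr0.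
have -> : Dd U c m j.+1 = N (fun s => apply (@QMQ n k c) (run U c j) s -
                                      apply (@QMQ n k m) (run U m j) s).
  transitivity (N (apply (U j.+1) (fun t => apply (@QMQ n k c) (run U c j) t -
                                      apply (@QMQ n k m) (run U m j) t))).
    by rewrite /Dd /N; apply: eq_bigr => s _ /=; rewrite apply_sub.
  exact: unitary_N (hU _ hj).
case: j IH hj => [|j] IH hj.
  by rewrite big_ord1 mul1r /Ee.
set j1 := j.+1.
have j1p : (0 : R) < j1%:R by rewrite ltr0n.
have key : j1%:R * N (fun s => apply (@QMQ n k c) (run U c j1) s -
                                      apply (@QMQ n k m) (run U m j1) s)
   <= (j1%:R + 1) * Dd U c m j1 + j1%:R * (j1%:R + 1) * Ee U c m j1.
  have -> : Dd U c m j1 = N (fun s => apply (@QMQ n k c) (run U c j1) s -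
                                      apply (@QMQ n k c) (run U m j1) s).
    rewrite /Dd -(N_QMQ c); rewrite /N; apply: eq_bigr => s _.
    by rewrite !apply_QMQ.
  rewrite /Ee /N !mulr_sumr -big_split /=; apply: ler_sum => s _.
  have -> : apply (@QMQ n k c) (run U c j1) s - apply (@QMQ n k m) (run U m j1) s =
    (apply (@QMQ n k c) (run U c j1) s - apply (@QMQ n k c) (run U m j1) s) +
    (apply (@QMQ n k c) (run U m j1) s - apply (@QMQ n k m) (run U m j1) s) by ring.
  exact: (sqnorm_addj _ _ j1p).
have IH' := IH (ltnW hj).
rewrite big_ord_recr /=.
set S := \sum_(i < j1) Ee U c m i in IH' *.
set X := N _ in key *.
have E0 : 0 <= Ee U c m j1 by exact: N_ge0.
rewrite -/j1 in IH'. rewrite -natr1.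
have h1 : (j1%:R + 1) * Dd U c m j1 <= (j1%:R + 1) * (j1%:R * S).
  by apply: ler_wpM2l => //; lra.
have h2 : j1%:R * X <= j1%:R * ((j1%:R + 1) * (S + Ee U c m j1)).
  apply: (le_trans key); rewrite -[X in _ <= X]/(j1%:R * ((j1%:R + 1) * (S + Ee U c m j1))).
  have -> : j1%:R * ((j1%:R + 1) * (S + Ee U c m j1)) =
    (j1%:R + 1) * (j1%:R * S) + j1%:R * (j1%:R + 1) * Ee U c m j1 by ring.
  by rewrite lerD2r.
by rewrite ler_pM2l // in h2.
Qed.
Lemma count_sum n (A : {set concept n}) (P : pred (concept n)) :
  \sum_(c in A) ((P c)%:R : R) = #|[set c in A | P c]|%:R.
Proof.
transitivity (\sum_(c in [set c in A | P c]) (1:R)); last by rewrite sumr_const.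
rewrite [RHS]big_mkcond [LHS]big_mkcond; apply: eq_bigr => c _.
by rewrite inE; case: (c \in A); case: (P c).
Qed.

Definition maj n (C' : {set concept n}) : concept n :=
  [ffun x => (#|[set c in C' | c x == false]| <= #|[set c in C' | c x == true]|)%N].

Lemma gamma_ab_ge0 n (C' : {set concept n}) a b : 0 <= gamma_ab C' a b.
Proof. by rewrite /gamma_ab divr_ge0. Qed.

Lemma gamma_ab_le1 n (C' : {set concept n}) a b : gamma_ab C' a b <= 1.
Proof.
rewrite /gamma_ab; case: (posnP #|C'|) => [->|p]; first by rewrite invr0 mulr0.
rewrite ler_pdivrMr ?ltr0n // mul1r ler_nat.
by apply: subset_leq_card; apply/subsetP => c; rewrite inE => /andP[].
Qed.

Lemma gamma_le1 n (C' : {set concept n}) : gamma C' <= 1.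
Proof.
rewrite /gamma; apply: bigmax_le => // a _.
rewrite /gamma_a; apply: le_trans (gamma_ab_le1 C' a false).
by rewrite ge_min lexx.
Qed.

Lemma minority_le n (C' : {set concept n}) x :
  #|[set c in C' | c x != maj C' x]|%:R <= gamma C' * #|C'|%:R :> R.
Proof.
have hset : [set c in C' | c x != maj C' x] = [set c in C' | c x == ~~ maj C' x].
  by apply: eq_finset => c; case: (c x); case: (maj C' x).
rewrite hset.
case: (posnP #|C'|) => [z|p].
  have h0 : #|[set c in C' | c x == ~~ maj C' x]| = 0%N.
    apply/eqP; rewrite -leqn0 -z.
    by apply: subset_leq_card; apply/subsetP => c; rewrite inE => /andP[].
  rewrite h0; apply: mulr_ge0 => //.
  exact: bigmax_ge_id.
have -> : #|[set c in C' | c x == ~~ maj C' x]|%:R = gamma_ab C' x (~~ maj C' x) * #|C'|%:R :> R.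
  by rewrite /gamma_ab divfK // pnatr_eq0 -lt0n.
apply: ler_wpM2r => //.
apply: (@le_trans _ _ (gamma_a C' x)); last first.
  rewrite /gamma; exact: (le_bigmax 0 (fun a => gamma_a C' a) x).
have hm := ffunE (fun x => (#|[set c in C' | c x == false]| <= #|[set c in C' | c x == true]|)%N) x.
rewrite -/(maj C') in hm.
rewrite /gamma_a /gamma_ab; case E: (maj C' x) hm => /= hm.
  rewrite le_min lexx /=; apply: ler_wpM2r; first by rewrite invr_ge0.
  by rewrite ler_nat -hm.
rewrite le_min lexx andbT; apply: ler_wpM2r; first by rewrite invr_ge0.
by rewrite ler_nat; apply: ltnW; rewrite ltnNge -hm.
Qed.

Lemma avg n k (C' : {set concept n}) (v : qvec n k) :
  \sum_(c in C') W c (maj C') v <= gamma C' * #|C'|%:R * N v.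
Proof.
rewrite /W exchange_big /= /N mulr_sumr; apply: ler_sum => s _.
rewrite -mulr_suml count_sum; apply: ler_wpM2r; first exact: sqnorm_ge0.
exact: minority_le.
Qed.

Lemma exists_Cmin n (C : {set concept n}) : (2 <= #|C|)%N ->
  exists2 C' : {set concept n}, (C' \subset C) && (2 <= #|C'|)%N & gamma C' <= gammahat C.
Proof.
move=> hC.
have PC : (C \subset C) && (2 <= #|C|)%N by rewrite subxx hC.
have [C0 HC0 E] := @eq_bigmin _ _ _ (1:R) C (fun C' : {set concept n} => (C' \subset C) && (2 <= #|C'|)%N)
   (fun C' => gamma C') PC (fun i _ => gamma_le1 i).
by exists C0 => //; rewrite /gammahat E.
Qed.
Lemma sum_sub_le (I : finType) (P : pred I) (f : I -> R) :
  (forall i, 0 <= f i) -> \sum_(i | P i) f i <= \sum_i f i.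
Proof.
move=> h; rewrite big_mkcond /=; apply: ler_sum => i _.
by case: (P i) => //; exact: h.
Qed.

Lemma distinguish n k (U : nat -> qop n k) T (dec : basis n k -> option (concept n)) (c1 c2 : concept n) :
  c1 != c2 -> N (run U c1 T) = 1 -> N (run U c2 T) = 1 ->
  2 / 3 <= success_prob U T dec c1 -> 2 / 3 <= success_prob U T dec c2 ->
  1 / 18 <= N (fun s => run U c1 T s - run U c2 T s).
Proof.
move=> c12 N1 N2 s1 s2.
set p1 := run U c1 T in N1 s1 *; set p2 := run U c2 T in N2 s2 *.
rewrite /success_prob -/p1 -/p2 in s1 s2.
set b := \sum_(s | dec s == Some c1) sqnorm (p2 s).
have hb : b <= 1 / 3.
  have : b + \sum_(s | dec s == Some c2) sqnorm (p2 s) <= 1.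
    rewrite -N2 /N [X in _ <= X](bigID (fun s => dec s == Some c1)) /= lerD2l.
    rewrite [X in _ <= X]big_mkcond [X in X <= _]big_mkcond /=; apply: ler_sum => s _.
    case: eqP => [E|_]; last by case: ifP => // _; exact: sqnorm_ge0.
    case: ifP => // H; exfalso; move/negbFE/eqP: H => H; rewrite H in E; case: E => H2.
    by move: c12; rewrite H2 eqxx.
  lra.
have hd : \sum_(s | dec s == Some c1) sqnorm (p1 s) <=
   4 * \sum_(s | dec s == Some c1) sqnorm (p1 s - p2 s) + 4 / 3 * b.
  rewrite /b !mulr_sumr -big_split /=; apply: ler_sum => s _; exact: sqnorm_dist.
have hs := @sum_sub_le _ (fun s => dec s == Some c1) (fun s => sqnorm (p1 s - p2 s)) (fun s => sqnorm_ge0 _).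
rewrite /N; lra.
Qed.
Lemma exists_argmin (I : finType) (A : {set I}) (F : I -> R) i1 : i1 \in A ->
  exists2 i0, i0 \in A & forall i, i \in A -> F i0 <= F i.
Proof.
move=> h; case: (@arg_minP _ _ _ i1 (fun i => i \in A) F h) => i Ai H.
by exists i.
Qed.

Theorem theorem7 :
  exists kappa : R, 0 < kappa /\
  forall (n k : nat) (C : {set concept n}), (2 <= #|C|)%N ->
  forall (T : nat) (U : nat -> qop n k) (dec : basis n k -> option (concept n)),
    (forall i, (i <= T)%N -> unitary (U i)) ->
    (forall c, c \in C -> 2 / 3 <= success_prob U T dec c) ->
    kappa * Num.sqrt (1 / gammahat C) <= T%:R.
Proof.
exists (1 / 24); split; first lra.
move=> n k C hC T U dec hU hs.
have [C' /andP [sub2 hC'] gle] := exists_Cmin hC.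
set m := maj C'.
set D := fun c => Dd U c m T.
have D0 : forall c, 0 <= D c by move=> c; exact: N_ge0.
have pair : forall c1 c2, c1 \in C' -> c2 \in C' -> c1 != c2 -> 1 / 36 <= D c1 + D c2.
  move=> c1 c2 i1 i2 c12.
  have h := @distinguish _ _ U T dec _ _ c12 (run_N c1 hU (leqnn T)) (run_N c2 hU (leqnn T))
     (hs c1 (subsetP sub2 _ i1)) (hs c2 (subsetP sub2 _ i2)).
  have h2 : N (fun s => run U c1 T s - run U c2 T s) <= 2 * D c1 + 2 * D c2.
    rewrite /D /Dd /N !mulr_sumr -big_split /=; apply: ler_sum => s _.
    exact: sqnorm_subm.
  lra.
have [c1 c1in] : exists c, c \in C'.
  by apply/set0Pn; rewrite -card_gt0; apply: leq_trans hC'.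
have [c0 c0in c0min] := exists_argmin D c1in.
have lower : (#|C'|%:R - 1) / 72 <= \sum_(c in C') D c.
  have -> : (#|C'|%:R - 1 : R) = #|[set c in C' | c != c0]|%:R.
    have -> : [set c in C' | c != c0] = C' :\ c0.
      by apply/setP => c; rewrite !inE andbC.
    by rewrite (cardsD1 c0 C') c0in natrD /=; ring.
  rewrite -count_sum mulr_suml; apply: ler_sum => c cin.
  case: eqP => [->|/eqP cn]; first by rewrite mul0r.
  have := pair c c0 cin c0in cn; have := c0min c cin; rewrite /= mul1r; lra.
set g := gamma C'.
have g0 : 0 <= g by exact: bigmax_ge_id.
have upper : \sum_(c in C') D c <= 4 * T%:R * T%:R * g * #|C'|%:R.
  apply: (@le_trans _ _ (\sum_(c in C') T%:R * \sum_(i < T) 4 * W c m (run U m i))).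
    apply: ler_sum => c _.
    apply: (le_trans (hybrid c m hU (leqnn T))).
    apply: ler_wpM2l => //; apply: ler_sum => i _; exact: QMQ_diff.
  rewrite -mulr_sumr exchange_big /=.
  have -> : 4 * T%:R * T%:R * g * #|C'|%:R = T%:R * \sum_(i < T) (4 * (g * #|C'|%:R * 1)).
    by rewrite sumr_const card_ord; rewrite -mulr_natr; ring.
  apply: ler_wpM2l => //; apply: ler_sum => i _.
  rewrite -mulr_sumr; apply: ler_wpM2l => //.
  apply: (le_trans (avg C' (run U m i))).
  by rewrite (run_N m hU (ltnW (ltn_ord i))).
have K2 : (2 : R) <= #|C'|%:R by rewrite (ler_nat R 2).
have key : 1 <= 576 * (T%:R * T%:R) * g.
  have h := le_trans lower upper.
  have TT : 0 <= T%:R * T%:R :> R by apply: mulr_ge0.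
  nra.
have key2 : 1 <= 576 * (T%:R * T%:R) * gammahat C.
  apply: (le_trans key); apply: ler_wpM2l => //.
  by apply: mulr_ge0 => //; apply: mulr_ge0.
have gp : 0 < gammahat C.
  have TT : 0 <= T%:R * T%:R :> R by apply: mulr_ge0.
  rewrite lt_neqAle; apply/andP; split.
    apply/eqP => E; move: key2; rewrite -E mulr0; lra.
  exact: le_trans gle.
have hi : 1 / gammahat C <= (24 * T%:R) ^+ 2.
  rewrite ler_pdivrMr //; rewrite expr2; lra.
have := ler_wsqrtr hi; rewrite sqrtr_sqr ger0_norm; last by apply: mulr_ge0.
lra.
Qed.
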